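(* Let $R$ satisfy the assumptions in the context and fix $j\in\llbracket 1,m_x\rrbracket$. Suppose $N^*_{j-\frac12,k-\frac12}\ge 0$ for all $k\in\llbracket1,m_y\rrbracket$, and set $U^*_{j-\frac12,k-\frac12}=\varepsilon\ln N^*_{j-\frac12,k-\frac12}$ (with the convention $\exp(U^*/\varepsilon)=0$ when $N^*=0$). Then: (i) the equation $$\rho=\Delta y\sum_{k=1}^{m_y}\exp\Big(\frac{U^*_{j-\frac12,k-\frac12}+\Delta t\,R(y_{k-\frac12},\rho)}{\varepsilon}\Big)$$ has a unique solution $\rho=\rho^{h+1}_{j-\frac12}\in[0,\infty)$; consequently the scheme $U^{h+1}_{j-\frac12,k-\frac12}=U^*_{j-\frac12,k-\frac12}+\Delta t\,R(y_{k-\frac12},\rho^{h+1}_{j-\frac12})$, $N^{h+1}_{j-\frac12,k-\frac12}=\exp(U^{h+1}_{j-\frac12,k-\frac12}/\varepsilon)$, admits a unique solution, and it satisfies $N^{h+1}_{j-\frac12,k-\frac12}\ge 0$ for all $k$ and $\rho^{h+1}_{j-\frac12}=\Delta y\sum_{k}N^{h+1}_{j-\frac12,k-\frac12}$; (ii) if moreover $0\le \rho^*_{j-\frac12}:=\Delta y\sum_{k=1}^{m_y}N^*_{j-\frac12,k-\frac12}\le\rho_M$, then $0\le\rho^{h+1}_{j-\frac12}\le\rho_M$.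
   Context: Fix $Y>0$, integers $m_x,m_y\ge1$, $\Delta y=Y/m_y$, $y_{k-\frac12}=(k-\frac12)\Delta y$, $\Delta t>0$, $\varepsilon>0$, and $\rho_M\in(0,\infty)$. The function $R:[0,Y]\times[0,\infty)\to\mathbb{R}$ is smooth and bounded and satisfies $R(Y,0)=0$, $R(0,\rho_M)=0$, $\partial_\rho R(y,\rho)<0$ for all $(y,\rho)$, and $\partial_y R(y,\rho)<0$ for $y\in(0,Y]$. The scheme above is the implicit time discretisation of the reaction step $\partial_t u=R(y,\rho)$, $\rho=\int_0^Y e^{u/\varepsilon}dy$, with $n=e^{u/\varepsilon}$. *)

(* Defs.v *)
From Stdlib Require Import Reals.
From Coquelicot Require Import Coquelicot.
Open Scope R_scope.

Fixpoint Ck2 (n : nat) (f : R -> R -> R) : Prop :=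
  (forall x y : R, continuous (fun p : R * R => f (fst p) (snd p)) (x, y)) /\
  match n with
  | O => True
  | S m =>
      (forall x y : R, ex_derive (fun t => f t y) x /\ ex_derive (fun t => f x t) y) /\
      Ck2 m (fun x y => Derive (fun t => f t y) x) /\
      Ck2 m (fun x y => Derive (fun t => f x t) y)
  end.

Definition smooth2 (f : R -> R -> R) : Prop := forall n, Ck2 n f.

(* exp((U + a)/eps) where U = eps * ln N, with the convention that it is 0
   when N = 0 (U = -infinity). *)
Definition expU (eps N a : R) : R :=
  if Req_EM_T N 0 then 0 else exp ((eps * ln N + a) / eps).

(* Main.v *)
Require Import Defs.
From Stdlib Require Import Reals.
From Stdlib Require Import Lra Lia.
From Coquelicot Require Import Coquelicot.
Open Scope R_scope.
From Coquelicot Require Import Coquelicot.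
Open Scope R_scope.

Lemma s1_0 (a : nat -> R) : 0 = sum_n_m a 1 0.
Proof. rewrite sum_n_m_zero; [reflexivity| lia]. Qed.
Lemma s1_S (a : nat -> R) m : sum_n_m a 1 m + a (S m) = sum_n_m a 1 (S m).
Proof. rewrite sum_n_Sm; [reflexivity| lia]. Qed.

Lemma sum_le_loc (a b : nat -> R) m :
  (forall k, (1 <= k <= m)%nat -> a k <= b k) -> sum_n_m a 1 m <= sum_n_m b 1 m.
Proof.
  induction m; intros H. rewrite <- !s1_0; lra.
  rewrite <- !s1_S. assert (sum_n_m a 1 m <= sum_n_m b 1 m) by (apply IHm; intros; apply H; lia).
  assert (a (S m) <= b (S m)) by (apply H; lia). lra.
Qed.

Lemma sum_scal (a : nat -> R) c m : c * sum_n_m a 1 m = sum_n_m (fun k => c * a k) 1 m.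
Proof. induction m. rewrite <- !s1_0; ring. rewrite <- !s1_S, <- IHm; ring. Qed.

Lemma sum_cont (g : nat -> R -> R) m x :
  (forall k, continuity_pt (g k) x) -> continuity_pt (fun r => sum_n_m (fun k => g k r) 1 m) x.
Proof.
  intros H; induction m.
  - apply continuity_pt_ext with (f := fun _ => 0). intros; apply s1_0. apply continuity_pt_const. intros ? ?; auto.
  - apply continuity_pt_ext with (f := fun r => sum_n_m (fun k => g k r) 1 m + g (S m) r). intros; apply s1_S.
    apply continuity_pt_plus; auto.
Qed.

Lemma decr (f : R -> R) a b : (forall x, ex_derive f x) ->
  (forall x, a < x < b -> Derive f x <= 0) -> a <= b -> f b <= f a.
Proof.
  intros Hd Hn Hab. destruct (Req_dec a b) as [->|Hne]; [lra|].
  destruct (MVT_cor2 f (Derive f) a b) as [c [Heq Hc]]. lra.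
  - intros x Hx. apply is_derive_Reals, Derive_correct, Hd.
  - specialize (Hn c Hc). nra.
Qed.

Lemma sum_nonneg (a : nat -> R) m : (forall k, (1 <= k <= m)%nat -> 0 <= a k) -> 0 <= sum_n_m a 1 m.
Proof.
  induction m; intros H. rewrite <- s1_0; lra.
  rewrite <- s1_S. assert (0 <= sum_n_m a 1 m) by (apply IHm; intros; apply H; lia).
  assert (0 <= a (S m)) by (apply H; lia). lra.
Qed.

Lemma exp_mono x y : x <= y -> exp x <= exp y.
Proof. intros H; destruct (Rle_lt_or_eq_dec _ _ H) as [h| ->]; [left; apply exp_increasing; auto| lra]. Qed.

Lemma expU_eq eps N a : 0 < eps -> 0 <= N -> expU eps N a = N * exp (a / eps).
Proof.
  intros He HN; unfold expU; destruct Req_EM_T as [-> | Hn]; [ring|].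
  replace ((eps * ln N + a) / eps) with (ln N + a / eps) by (field; lra).
  rewrite exp_plus, exp_ln by lra. ring.
Qed.

Theorem propositionA2
  (Y : R) (mx my : nat) (dt eps rhoM : R) (Rf : R -> R -> R)
  (j : nat) (Nstar : nat -> nat -> R) :
  0 < Y -> (1 <= mx)%nat -> (1 <= my)%nat -> 0 < dt -> 0 < eps -> 0 < rhoM ->
  smooth2 Rf ->
  (exists M, forall y rho, 0 <= y <= Y -> 0 <= rho -> Rabs (Rf y rho) <= M) ->
  Rf Y 0 = 0 -> Rf 0 rhoM = 0 ->
  (forall y rho, 0 <= y <= Y -> 0 <= rho -> Derive (fun r => Rf y r) rho < 0) ->
  (forall y rho, 0 < y <= Y -> 0 <= rho -> Derive (fun t => Rf t rho) y < 0) ->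
  (1 <= j <= mx)%nat ->
  (forall k, (1 <= k <= my)%nat -> 0 <= Nstar j k) ->
  let dy := Y / INR my in
  let yk := fun k : nat => (INR k - 1 / 2) * dy in
  (* N^{h+1}_{j-1/2,k-1/2} = exp((U^* + dt R(y_{k-1/2}, rho))/eps) *)
  let Nnext := fun (rho : R) (k : nat) => expU eps (Nstar j k) (dt * Rf (yk k) rho) in
  let F := fun rho : R => dy * sum_n_m (fun k => Nnext rho k) 1 my in
  exists rho : R,
    (* (i) unique nonnegative solution of the fixed-point equation *)
    (0 <= rho /\ rho = F rho /\
     (forall rho', 0 <= rho' -> rho' = F rho' -> rho' = rho)) /\
    (* the resulting N^{h+1} are nonnegative and rho = dy * sum N^{h+1} *)
    (forall k, (1 <= k <= my)%nat -> 0 <= Nnext rho k) /\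
    rho = dy * sum_n_m (fun k => Nnext rho k) 1 my /\
    (* (ii) *)
    (0 <= dy * sum_n_m (fun k => Nstar j k) 1 my <= rhoM -> 0 <= rho <= rhoM).
Proof.
  intros HY Hmx Hmy Hdt Heps HrM Hs [M HM] HR0 HRM HdR HdY Hj HN dy yk Nnext F.
  destruct (Hs 1%nat) as [_ [Hd _]].
  assert (Hdy : 0 < dy).
  { unfold dy. apply Rdiv_lt_0_compat; auto. apply lt_0_INR; lia. }
  assert (Hyk : forall k, (1 <= k <= my)%nat -> 0 < yk k <= Y).
  { intros k Hk. unfold yk. assert (1 <= INR k) by (apply (le_INR 1); lia).
    assert (INR k <= INR my) by (apply le_INR; lia).
    assert (Hmy' : INR my * dy = Y) by (unfold dy; field; apply not_0_INR; lia).
    split; nra. }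
  assert (Rmono : forall y a b, 0 <= y <= Y -> 0 <= a <= b -> Rf y b <= Rf y a).
  { intros y a b Hy Hab. apply (decr (fun r => Rf y r)). intros; apply Hd.
    intros x Hx. left; apply HdR; lra. lra. }
  assert (Ymono : forall y rho, 0 <= y <= Y -> 0 <= rho -> Rf y rho <= Rf 0 rho).
  { intros y rho Hy Hr. apply (decr (fun t => Rf t rho)). intros; apply Hd.
    intros x Hx. left; apply HdY; lra. lra. }
  set (S := fun rho => sum_n_m (fun k => Nstar j k * exp (dt * Rf (yk k) rho / eps)) 1 my).
  assert (HF : forall rho, F rho = dy * S rho).
  { intros rho. unfold F, S. f_equal. apply sum_n_m_ext_loc. intros k Hk.
    unfold Nnext. apply expU_eq; [auto| apply HN; lia]. }
  assert (HS0 : forall rho, 0 <= S rho).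
  { intros rho; apply sum_nonneg. intros k Hk. apply Rmult_le_pos. apply HN; lia.
    left; apply exp_pos. }
  assert (Smono : forall a b, 0 <= a <= b -> S b <= S a).
  { intros a b Hab. apply sum_le_loc. intros k Hk. apply Rmult_le_compat_l. apply HN; lia.
    apply exp_mono. unfold Rdiv. apply Rmult_le_compat_r. left; apply Rinv_0_lt_compat; auto.
    apply Rmult_le_compat_l. lra. apply Rmono; auto. specialize (Hyk k Hk); lra. }
  set (S0 := sum_n_m (fun k => Nstar j k) 1 my).
  set (E := exp (dt * M / eps)).
  assert (Sbound : forall rho, 0 <= rho -> S rho <= E * S0).
  { intros rho Hr. unfold S0. rewrite sum_scal. apply sum_le_loc. intros k Hk.
    apply Rle_trans with (Nstar j k * E); [|right; ring]. apply Rmult_le_compat_l. apply HN; lia.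
    apply exp_mono. unfold Rdiv. apply Rmult_le_compat_r. left; apply Rinv_0_lt_compat; auto.
    apply Rmult_le_compat_l. lra. specialize (HM (yk k) rho). specialize (Hyk k Hk).
    assert (Rabs (Rf (yk k) rho) <= M) by (apply HM; lra). apply Rabs_le_between in H. lra. }
  assert (HS0' : 0 <= S0) by (apply sum_nonneg; intros; apply HN; lia).
  assert (HE : 0 < E) by apply exp_pos.
  set (G := fun r => r - dy * S r).
  assert (Gc : continuity G).
  { intros x. unfold G. apply continuity_pt_minus. apply continuity_pt_id.
    apply continuity_pt_mult. apply continuity_pt_const. intros ? ?; auto.
    unfold S. apply sum_cont. intros k. apply continuity_pt_filterlim.
    apply (ex_derive_continuous (K:=R_AbsRing) (V:=R_NormedModule) (fun r => Nstar j k * exp (dt * Rf (yk k) r / eps))). auto_derive. apply Hd. }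
  set (B := dy * (E * S0) + 1).
  assert (HB : 0 <= B). { unfold B. assert (0 <= E * S0) by nra. nra. }
  destruct (IVT_cor G 0 B Gc HB) as [rho [Hrho HG]].
  { unfold G. specialize (HS0 0). specialize (Sbound B HB).
    assert (dy * S B <= dy * (E * S0)) by (apply Rmult_le_compat_l; lra).
    assert (0 <= B - dy * S B) by (unfold B at 1; lra).
    assert (0 <= dy * S 0) by (apply Rmult_le_pos; lra).
    apply Rmult_le_0_r; lra. }
  unfold G in HG.
  assert (Hfix : rho = F rho) by (rewrite HF; lra).
  exists rho. split; [split; [lra| split; [exact Hfix|]]|].
  { intros r' Hr' Hf'. rewrite HF in Hf'.
    destruct (Rtotal_order r' rho) as [Hl|[He|Hl]]; auto.
    - assert (S rho <= S r') by (apply Smono; lra). nra.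
    - assert (S r' <= S rho) by (apply Smono; lra). nra. }
  split; [|split].
  - intros k Hk. unfold Nnext. rewrite expU_eq; [|auto| apply HN; lia]. apply Rmult_le_pos. apply HN; lia.
    left; apply exp_pos.
  - exact Hfix.
  - intros [_ Hle]. split; [lra|]. destruct (Rle_or_lt rho rhoM) as [h|h]; auto. exfalso.
    assert (S rho <= S0).
    { unfold S, S0. apply sum_le_loc. intros k Hk.
      rewrite <- (Rmult_1_r (Nstar j k)) at 2. apply Rmult_le_compat_l. apply HN; lia.
      rewrite <- exp_0. apply exp_mono. specialize (Hyk k Hk).
      assert (Rf (yk k) rho <= Rf (yk k) rhoM) by (apply Rmono; lra).
      assert (Rf (yk k) rhoM <= Rf 0 rhoM) by (apply Ymono; lra).
      assert (dt * Rf (yk k) rho <= 0) by nra.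
      unfold Rdiv. assert (0 < / eps) by (apply Rinv_0_lt_compat; auto). nra. }
    fold S0 in Hle. nra.
Qed.
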